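(* Let $\beta\ge 0$ be real, let $n\ge 0$ be fixed, and let $a_{n,0},a_{n,1},\dots,a_{n,n}$ be real numbers, with the convention $a_{n,k}=0$ for $k>n$. Define, for $0<t\le\pi$, \[ K_n(t):=\sum_{k=0}^{n}a_{n,k}\frac{\sin\left(k+\frac12\right)t}{2\sin\frac t2}, \] let $\tau$ denote the integer part of $\pi/t$, and let $A_{n,\tau}:=\sum_{r=0}^{\tau}a_{n,r}$. (i) If \[ \sum_{k=m}^{\infty}(k+1)^{\beta}\left|\frac{a_{n,k}}{(k+1)^{\beta}}-\frac{a_{n,k+1}}{(k+2)^{\beta}}\right|=\mathcal{O}(a_{n,m})\quad\text{for } 0\le m\le n, \] then, uniformly in $0<t\le\pi$, $|K_n(t)|=\mathcal{O}\left(t^{-1}A_{n,\tau}\right)$. (ii) If \[ \sum_{k=0}^{m-1}(k+1)^{\beta}\left|\frac{a_{n,k}}{(k+1)^{\beta}}-\frac{a_{n,k+1}}{(k+2)^{\beta}}\right|=\mathcal{O}(a_{n,m})\quad\text{for } 0\le m\le n, \] then $|K_n(t)|=\mathcal{O}\left(a_{n,n}/t^2\right)$ for $0<t\le\pi$.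
   Context: The notation $u=\mathcal{O}(v)$ means $u\le Cv$ for some positive constant $C$. *)

(* Defs.v *)
From Stdlib Require Import Reals List.
Open Scope R_scope.

Definition lsum (l : list nat) (f : nat -> R) : R :=
  fold_right Rplus 0 (map f l).

(* sum_{k=m}^{n} f k (empty if n < m). *)
Definition sum_mn (m n : nat) (f : nat -> R) : R := lsum (seq m (S n - m)) f.

Definition pw (k : nat) (beta : R) : R := Rpower (INR k + 1) beta.

Definition dterm (beta : R) (a : nat -> R) (k : nat) : R :=
  pw k beta * Rabs (a k / pw k beta - a (S k) / pw (S k) beta).

Definition Kn (n : nat) (a : nat -> R) (t : R) : R :=
  sum_mn 0 n (fun k => a k * sin ((INR k + / 2) * t) / (2 * sin (t / 2))).

Definition tau (t : R) : nat := Z.to_nat (Int_part (PI / t)).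

Definition Atau (a : nat -> R) (t : R) : R := sum_mn 0 (tau t) a.

(* Main.v *)
Require Import Defs.
From Stdlib Require Import Reals List Lra Lia Psatz ZArith.
Open Scope R_scope.

Lemma sin_lower a : 0 <= a -> a <= 2 -> a / 4 <= sin a.
Proof.
intros h0 h2.
assert (a <= PI) by (generalize PI2_3_2; lra).
destruct (SIN a h0 H) as [H1 _].
eapply Rle_trans; [|exact H1].
unfold sin_lb, sin_approx, sin_term; simpl sum_f_R0; simpl.
set (y := a*a).
assert (hy : 0 <= y <= 4) by (unfold y; nra).
assert (hy2 : 0 <= y*y <= 16) by nra.
assert (hy3 : y*y*y <= 64) by nra.
assert (hg : 0 <= 3/4 - y/6 - y*y*y/5040) by nra.
assert (0 <= a * (3/4 - y/6 - y*y*y/5040)) by nra.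
assert (0 <= a * (y*y)) by nra.
unfold y in *. lra.
Qed.

Lemma lsum_nil f : lsum nil f = 0.
Proof. reflexivity. Qed.

Lemma lsum_cons x l f : lsum (x :: l) f = f x + lsum l f.
Proof. reflexivity. Qed.

Lemma lsum_app l1 l2 f : lsum (l1 ++ l2) f = lsum l1 f + lsum l2 f.
Proof. induction l1 as [|x l IH]; simpl. rewrite lsum_nil; lra. rewrite !lsum_cons, IH. lra. Qed.

Lemma lsum_seqS p L f : lsum (seq p (S L)) f = lsum (seq p L) f + f (p + L)%nat.
Proof. rewrite seq_S, lsum_app, lsum_cons, lsum_nil. ring. Qed.

Lemma lsum_seq_split p L1 L2 f :
  lsum (seq p (L1 + L2)) f = lsum (seq p L1) f + lsum (seq (p + L1) L2) f.
Proof. rewrite seq_app, lsum_app. reflexivity. Qed.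

Lemma lsum_le_in l f g : (forall k, In k l -> f k <= g k) -> lsum l f <= lsum l g.
Proof.
induction l as [|x l IH]; intros H. unfold lsum; simpl; lra.
rewrite !lsum_cons. apply Rplus_le_compat. apply H; simpl; auto.
apply IH; intros; apply H; simpl; auto.
Qed.

Lemma lsum_ext_in l f g : (forall k, In k l -> f k = g k) -> lsum l f = lsum l g.
Proof.
induction l as [|x l IH]; intros H. reflexivity.
rewrite !lsum_cons. rewrite H by (simpl; auto). rewrite IH; auto.
intros; apply H; simpl; auto.
Qed.

Lemma lsum_abs l f : Rabs (lsum l f) <= lsum l (fun k => Rabs (f k)).
Proof.
induction l as [|x l IH]. unfold lsum; simpl. rewrite Rabs_R0; lra.
rewrite !lsum_cons. eapply Rle_trans. apply Rabs_triang. lra.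
Qed.

Lemma lsum_nonneg l f : (forall k, In k l -> 0 <= f k) -> 0 <= lsum l f.
Proof.
intros H. replace 0 with (lsum l (fun _ => 0)). apply lsum_le_in; auto.
induction l; auto. rewrite lsum_cons, IHl. lra. intros; apply H; simpl; auto.
Qed.

Lemma lsum_scal l c f : lsum l (fun k => c * f k) = c * lsum l f.
Proof. induction l; unfold lsum in *; simpl. ring. rewrite IHl. ring. Qed.

Lemma lsum_plus l f g : lsum l (fun k => f k + g k) = lsum l f + lsum l g.
Proof. induction l; unfold lsum in *; simpl. ring. rewrite IHl. ring. Qed.

Lemma lsum_const_lb p L f c :
  (forall k, (p <= k < p + L)%nat -> c <= f k) -> INR L * c <= lsum (seq p L) f.
Proof.
induction L; intros H. simpl. unfold lsum; simpl; lra.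
rewrite lsum_seqS, S_INR.
assert (c <= f (p + L)%nat) by (apply H; lia).
assert (INR L * c <= lsum (seq p L) f) by (apply IHL; intros; apply H; lia).
lra.
Qed.

Lemma lsum_telescope p L g :
  lsum (seq p L) (fun j => g (S j) - g j) = g (p + L)%nat - g p.
Proof.
induction L. simpl. rewrite Nat.add_0_r. unfold lsum; simpl; lra.
rewrite lsum_seqS, IHL. replace (p + S L)%nat with (S (p + L)) by lia. lra.
Qed.

Lemma abel u v V p :
  V p = v p -> (forall k, (p <= k)%nat -> V (S k) = V k + v (S k)) ->
  forall L, lsum (seq p (S L)) (fun k => u k * v k) =
    lsum (seq p L) (fun k => (u k - u (S k)) * V k) + u (p + L)%nat * V (p + L)%nat.
Proof.
intros H0 HS L. induction L.
- simpl. rewrite Nat.add_0_r, H0. unfold lsum; simpl. lra.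
- rewrite lsum_seqS, IHL, lsum_seqS.
  replace (p + S L)%nat with (S (p + L)) by lia.
  rewrite (HS (p + L)%nat) by lia. ring.
Qed.

Definition Vs (p : nat) (v : nat -> R) (k : nat) : R := lsum (seq p (S k - p)) v.

Lemma Vs_p p v : Vs p v p = v p.
Proof. unfold Vs. replace (S p - p)%nat with 1%nat by lia. unfold lsum; simpl; lra. Qed.

Lemma Vs_S p v k : (p <= k)%nat -> Vs p v (S k) = Vs p v k + v (S k).
Proof.
intros H. unfold Vs. replace (S (S k) - p)%nat with (S (S k - p)) by lia.
rewrite lsum_seqS. f_equal. f_equal. lia.
Qed.

Lemma Vs_eq p v k : (p <= k)%nat -> Vs p v k = lsum (seq p (S (k - p))) v.
Proof. intros; unfold Vs; f_equal; f_equal; lia. Qed.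

Definition D (t : R) (k : nat) : R := sin ((INR k + / 2) * t) / (2 * sin (t / 2)).

Lemma sin_half_lb t : 0 < t -> t <= PI -> t / 8 <= sin (t / 2).
Proof.
intros h1 h2. generalize PI_4; intro.
generalize (sin_lower (t/2)); intro H'. lra.
Qed.

Lemma D_abs t k : 0 < t -> t <= PI -> Rabs (D t k) <= 4 / t.
Proof.
intros h1 h2. pose proof (sin_half_lb t h1 h2) as hs.
unfold D. set (s := sin (t/2)) in *. unfold Rdiv. rewrite Rabs_mult, Rabs_inv.
rewrite (Rabs_pos_eq (2 * s)) by lra.
assert (Rabs (sin ((INR k + / 2) * t)) <= 1) by (apply Rabs_le; apply SIN_bound).
assert (0 <= / (2 * s) <= 4 * / t).
{ split. apply Rlt_le, Rinv_0_lt_compat; lra.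
  replace (4 * / t) with (/ (t / 4)) by (field; lra).
  apply Rinv_le_contravar; lra. }
assert (0 <= Rabs (sin ((INR k + / 2) * t))) by apply Rabs_pos.
nra.
Qed.

Lemma D_tele t k : 0 < t -> t <= PI ->
  D t k = (cos (INR k * t) - cos (INR (S k) * t)) / (4 * sin (t / 2) ^ 2).
Proof.
intros h1 h2. pose proof (sin_half_lb t h1 h2) as hs.
unfold D. rewrite S_INR.
replace (INR k * t) with ((INR k + /2) * t - t/2) by field.
replace ((INR k + 1) * t) with ((INR k + /2) * t + t/2) by field.
rewrite cos_minus, cos_plus. field. lra.
Qed.

Lemma D_partial t p L : 0 < t -> t <= PI ->
  Rabs (lsum (seq p L) (D t)) <= 32 / t ^ 2.
Proof.
intros h1 h2. pose proof (sin_half_lb t h1 h2) as hs.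
set (s := sin (t/2)) in *.
set (g := fun j : nat => - cos (INR j * t) / (4 * s ^ 2)).
rewrite (lsum_ext_in _ _ (fun j => g (S j) - g j)).
2:{ intros k _. rewrite D_tele by lra. unfold g. fold s. field. lra. }
rewrite lsum_telescope. unfold g.
replace (- cos (INR (p + L) * t) / (4 * s ^ 2) - - cos (INR p * t) / (4 * s ^ 2))
  with ((cos (INR p * t) - cos (INR (p + L) * t)) * / (4 * s ^ 2)) by (field; lra).
rewrite Rabs_mult, Rabs_inv, (Rabs_pos_eq (4 * s^2)) by nra.
assert (Rabs (cos (INR p * t) - cos (INR (p + L) * t)) <= 2).
{ pose proof (COS_bound (INR p * t)). pose proof (COS_bound (INR (p+L) * t)).
  apply Rabs_le; lra. }
assert (0 <= / (4 * s^2) <= 16 / t^2).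
{ split. apply Rlt_le, Rinv_0_lt_compat; nra.
  replace (16 / t^2) with (/ (t^2/16)) by (field; lra).
  apply Rinv_le_contravar; nra. }
pose proof (Rabs_pos (cos (INR p * t) - cos (INR (p + L) * t))).
nra.
Qed.

Lemma pw_pos k beta : 0 < pw k beta.
Proof. unfold pw, Rpower. apply exp_pos. Qed.

Lemma pw_mono k j beta : 0 <= beta -> (k <= j)%nat -> pw k beta <= pw j beta.
Proof.
intros hb hkj. unfold pw. apply Rle_Rpower_l; auto.
pose proof (pos_INR k). apply le_INR in hkj. lra.
Qed.

Lemma T_bound t p k beta : 0 < t -> t <= PI -> 0 <= beta -> (p <= k)%nat ->
  Rabs (Vs p (fun j => pw j beta * D t j) k) <= 2 * (32 / t ^ 2) * pw k beta.
Proof.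
intros h1 h2 hb hpk.
set (M := 32 / t ^ 2).
assert (hM : 0 <= M) by (unfold M; apply Rlt_le, Rdiv_lt_0_compat; [lra| apply pow_lt; lra]).
rewrite Vs_eq by auto.
rewrite (abel (fun j => pw j beta) (D t) (Vs p (D t)) p (Vs_p p (D t)) (Vs_S p (D t))).
replace (p + (k - p))%nat with k by lia.
eapply Rle_trans. apply Rabs_triang.
assert (HV : forall j, (p <= j)%nat -> Rabs (Vs p (D t) j) <= M).
{ intros j hj. rewrite Vs_eq by auto. apply D_partial; auto. }
assert (H1 : Rabs (lsum (seq p (k - p)) (fun j => (pw j beta - pw (S j) beta) * Vs p (D t) j))
   <= M * (pw k beta - pw p beta)).
{ eapply Rle_trans. apply lsum_abs.
  eapply Rle_trans.
  apply (lsum_le_in _ _ (fun j => M * (pw (S j) beta - pw j beta))).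
  { intros j hj. apply in_seq in hj. rewrite Rabs_mult.
    rewrite Rabs_minus_sym, Rabs_pos_eq.
    2:{ pose proof (pw_mono j (S j) beta hb ltac:(lia)). lra. }
    pose proof (pw_mono j (S j) beta hb ltac:(lia)).
    pose proof (HV j ltac:(lia)). nra. }
  rewrite lsum_scal, (lsum_telescope p (k - p) (fun j => pw j beta)). replace (p + (k - p))%nat with k by lia. lra. }
rewrite Rabs_mult, (Rabs_pos_eq (pw k beta)) by (apply Rlt_le, pw_pos).
pose proof (HV k hpk). pose proof (pw_pos k beta). pose proof (pw_pos p beta).
nra.
Qed.

Lemma tail_bound n a t beta p : 0 < t -> t <= PI -> 0 <= beta -> a (S n) = 0 -> (p <= n)%nat ->
  Rabs (lsum (seq p (S (n - p))) (fun k => a k * D t k))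
  <= 64 / t ^ 2 * lsum (seq p (S (n - p))) (dterm beta a).
Proof.
intros h1 h2 hb han hpn.
set (M := 32 / t ^ 2).
assert (hM : 0 <= M) by (unfold M; apply Rlt_le, Rdiv_lt_0_compat; [lra| apply pow_lt; lra]).
replace (64 / t ^ 2) with (2 * M) by (unfold M; field; lra).
set (b := fun k => a k / pw k beta).
set (v := fun j => pw j beta * D t j).
rewrite (lsum_ext_in _ _ (fun k => b k * v k)).
2:{ intros k _. unfold b, v. field. apply Rgt_not_eq, pw_pos. }
rewrite (abel b v (Vs p v) p (Vs_p p v) (Vs_S p v)).
replace (p + (n - p))%nat with n by lia.
rewrite lsum_seqS. replace (p + (n - p))%nat with n by lia.
eapply Rle_trans. apply Rabs_triang.
assert (H1 : Rabs (lsum (seq p (n - p)) (fun k => (b k - b (S k)) * Vs p v k))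
  <= 2 * M * lsum (seq p (n - p)) (dterm beta a)).
{ eapply Rle_trans. apply lsum_abs. rewrite <- lsum_scal. apply lsum_le_in.
  intros j hj. apply in_seq in hj. rewrite Rabs_mult.
  pose proof (T_bound t p j beta h1 h2 hb ltac:(lia)) as HT. fold M v in HT.
  unfold dterm. fold (b j). fold (b (S j)).
  pose proof (Rabs_pos (b j - b (S j))). nra. }
assert (H2 : Rabs (b n * Vs p v n) <= 2 * M * dterm beta a n).
{ pose proof (T_bound t p n beta h1 h2 hb hpn) as HT. fold M v in HT.
  unfold dterm. fold (b n). rewrite han. replace (b n - 0 / pw (S n) beta) with (b n) by (unfold Rdiv; ring).
  rewrite Rabs_mult. pose proof (Rabs_pos (b n)). nra. }
lra.
Qed.

Lemma dterm_nonneg beta a k : 0 <= dterm beta a k.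
Proof. unfold dterm. pose proof (pw_pos k beta). pose proof (Rabs_pos (a k / pw k beta - a (S k) / pw (S k) beta)). nra. Qed.

Lemma Kn_eq n a t : Kn n a t = lsum (seq 0 (S n)) (fun k => a k * D t k).
Proof. unfold Kn, sum_mn. simpl (S n - 0)%nat. apply lsum_ext_in. intros; unfold D, Rdiv; ring. Qed.

Lemma head_bound N a t : 0 < t -> t <= PI -> (forall k, 0 <= a k) ->
  Rabs (lsum (seq 0 N) (fun k => a k * D t k)) <= 4 / t * lsum (seq 0 N) a.
Proof.
intros h1 h2 ha. eapply Rle_trans. apply lsum_abs. rewrite <- lsum_scal.
apply lsum_le_in. intros k _. rewrite Rabs_mult, Rabs_pos_eq by auto.
pose proof (D_abs t k h1 h2). pose proof (ha k). nra.
Qed.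

Lemma tau_prop t : 0 < t -> t <= PI -> PI / t < INR (tau t) + 1.
Proof.
intros h1 h2. assert (hx : 1 <= PI / t).
{ apply (Rmult_le_reg_r t); auto. unfold Rdiv. rewrite Rmult_assoc, Rinv_l by lra. lra. }
destruct (base_Int_part (PI / t)) as [b1 b2].
set (z := Int_part (PI / t)) in *.
assert (hz : (0 <= z)%Z). { assert (-1 < IZR z) by lra. apply lt_IZR in H. lia. }
unfold tau. fold z. rewrite INR_IZR_INZ, Z2Nat.id by auto. lra.
Qed.

Lemma bmono beta C n a k m : 0 <= beta -> 0 < C -> (k <= m)%nat -> (m <= n)%nat ->
  (forall m, (m <= n)%nat -> sum_mn m n (dterm beta a) <= C * a m) ->
  a m / pw m beta <= (1 + C) * (a k / pw k beta).
Proof.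
intros hb hC hkm hmn H.
set (b := fun j => a j / pw j beta).
change (b m <= (1 + C) * b k).
assert (E : b m - b k = lsum (seq k (m - k)) (fun j => b (S j) - b j)).
{ rewrite (lsum_telescope k (m - k) b). replace (k + (m - k))%nat with m by lia. lra. }
assert (H1 : pw k beta * (b m - b k) <= lsum (seq k (m - k)) (dterm beta a)).
{ rewrite E, <- lsum_scal. apply lsum_le_in. intros j hj. apply in_seq in hj.
  unfold dterm. fold (b j) (b (S j)).
  pose proof (pw_mono k j beta hb ltac:(lia)). pose proof (pw_pos k beta).
  assert (b (S j) - b j <= Rabs (b j - b (S j))).
  { rewrite Rabs_minus_sym. apply Rle_abs. }
  pose proof (Rabs_pos (b j - b (S j))). nra. }
assert (H2 : lsum (seq k (m - k)) (dterm beta a) <= sum_mn k n (dterm beta a)).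
{ unfold sum_mn. replace (S n - k)%nat with ((m - k) + (S n - m))%nat by lia.
  rewrite lsum_seq_split.
  assert (0 <= lsum (seq (k + (m - k)) (S n - m)) (dterm beta a)).
  { apply lsum_nonneg. intros; apply dterm_nonneg. }
  lra. }
pose proof (H k ltac:(lia)) as H3.
assert (ak : a k = pw k beta * b k). { unfold b. field. apply Rgt_not_eq, pw_pos. }
rewrite ak in H3. pose proof (pw_pos k beta).
assert (pw k beta * (b m - b k) <= pw k beta * (C * b k)) by lra.
apply Rmult_le_reg_l in H4; auto. lra.
Qed.

Lemma key beta C n a t : 0 <= beta -> 0 < C -> 0 < t -> t <= PI ->
  (forall k, 0 <= a k) -> (tau t < n)%nat ->
  (forall m, (m <= n)%nat -> sum_mn m n (dterm beta a) <= C * a m) ->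
  PI / t * a (S (tau t)) <= 2 * (1 + C) * Rpower 3 beta * Atau a t.
Proof.
intros hb hC h1 h2 ha htn H.
set (T := tau t) in *. set (p := S T).
set (R3 := Rpower 3 beta).
assert (hR3 : 0 < R3) by (unfold R3, Rpower; apply exp_pos).
set (s := (T / 2)%nat).
assert (hs : (2 * s <= T <= 2 * s + 1)%nat).
{ pose proof (Nat.div_mod_eq T 2). pose proof (Nat.mod_upper_bound T 2 ltac:(lia)). unfold s. lia. }
assert (Hk : forall k, (s <= k <= T)%nat -> a p <= (1 + C) * R3 * a k).
{ intros k hk.
  pose proof (bmono beta C n a k p hb hC ltac:(unfold p; lia) ltac:(unfold p; lia) H) as Hb.
  assert (hw : pw p beta <= R3 * pw k beta).
  { unfold R3, pw. pose proof (pos_INR k). rewrite Rpower_mult_distr; try lra.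
    apply Rle_Rpower_l; auto. split. pose proof (pos_INR p); lra.
    assert (h3 : (p + 1 <= 3 * (k + 1))%nat) by (unfold p; lia).
    apply le_INR in h3. rewrite mult_INR, !plus_INR in h3. replace (INR 3) with 3 in h3 by (simpl; lra). replace (INR 1) with 1 in h3 by reflexivity. lra. }
  set (x := a p / pw p beta) in *. set (y := a k / pw k beta) in *.
  assert (ep : a p = pw p beta * x) by (unfold x; field; apply Rgt_not_eq, pw_pos).
  assert (ek : a k = pw k beta * y) by (unfold y; field; apply Rgt_not_eq, pw_pos).
  assert (hx : 0 <= x) by (unfold x, Rdiv; apply Rmult_le_pos; [apply ha | apply Rlt_le, Rinv_0_lt_compat, pw_pos]).
  pose proof (pw_pos p beta). pose proof (pw_pos k beta).
  rewrite ep, ek.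
  assert (pw p beta * x <= R3 * pw k beta * x) by nra.
  assert (R3 * pw k beta * x <= R3 * pw k beta * ((1 + C) * y)).
  { apply Rmult_le_compat_l; nra. }
  nra. }
set (q := a p / ((1 + C) * R3)).
assert (hq : forall k, (s <= k <= T)%nat -> q <= a k).
{ intros k hk. unfold q. apply (Rmult_le_reg_l ((1 + C) * R3)). nra.
  replace ((1 + C) * R3 * (a p / ((1 + C) * R3))) with (a p) by (field; split; lra).
  apply Hk; auto. }
assert (HA : INR (S T - s) * q <= Atau a t).
{ unfold Atau, sum_mn. fold T. simpl (S T - 0)%nat.
  replace (seq 0 (S T)) with (seq 0 (s + (S T - s))) by (f_equal; lia).
  rewrite lsum_seq_split. simpl (0 + s)%nat.
  assert (0 <= lsum (seq 0 s) a) by (apply lsum_nonneg; auto).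
  assert (INR (S T - s) * q <= lsum (seq s (S T - s)) a).
  { apply lsum_const_lb. intros k hk. apply hq. lia. }
  lra. }
assert (Hn : INR (S T) <= 2 * INR (S T - s)).
{ assert (h : (S T <= 2 * (S T - s))%nat) by lia. apply le_INR in h.
  rewrite mult_INR in h. simpl INR in h at 2. lra. }
pose proof (tau_prop t h1 h2) as Ht. fold T in Ht. rewrite <- S_INR in Ht.
assert (hap : 0 <= a p) by auto.
assert (ep : a p = (1 + C) * R3 * q) by (unfold q; field; split; lra).
assert (hq0 : 0 <= q) by (unfold q, Rdiv; apply Rmult_le_pos; [auto | apply Rlt_le, Rinv_0_lt_compat; nra]).
assert (PI / t * a p <= INR (S T) * a p) by nra.
assert (INR (S T) * a p <= 2 * INR (S T - s) * a p) by nra.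
rewrite ep in *.
assert (2 * INR (S T - s) * ((1 + C) * R3 * q) = 2 * (1 + C) * R3 * (INR (S T - s) * q)) by ring.
assert (0 <= 2 * (1 + C) * R3) by nra.
nra.
Qed.

Theorem lemma2p4 (beta C : R) (hbeta : 0 <= beta) (hC : 0 < C) :
  (exists C1 : R, 0 < C1 /\
     forall (n : nat) (a : nat -> R),
       (forall k, (n < k)%nat -> a k = 0) ->
       (forall m, (m <= n)%nat -> sum_mn m n (dterm beta a) <= C * a m) ->
       forall t, 0 < t -> t <= PI -> Rabs (Kn n a t) <= C1 * (Atau a t / t))
  /\
  (exists C2 : R, 0 < C2 /\
     forall (n : nat) (a : nat -> R),
       (forall k, (n < k)%nat -> a k = 0) ->
       (forall m, (m <= n)%nat -> lsum (seq 0 m) (dterm beta a) <= C * a m) ->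
       forall t, 0 < t -> t <= PI -> Rabs (Kn n a t) <= C2 * (a n / t ^ 2)).
Proof.
assert (hR3 : 0 < Rpower 3 beta) by (unfold Rpower; apply exp_pos).
split.
- exists (4 + 64 * C * (1 + C) * Rpower 3 beta). split. nra.
  intros n a hz H t h1 h2.
  assert (ha : forall k, 0 <= a k).
  { intros k. destruct (le_lt_dec k n) as [hk|hk]; [|rewrite hz; auto; lra].
    pose proof (H k hk). assert (0 <= sum_mn k n (dterm beta a)).
    { apply lsum_nonneg; intros; apply dterm_nonneg. }
    nra. }
  assert (hA : 0 <= Atau a t) by (apply lsum_nonneg; auto).
  rewrite Kn_eq.
  set (T := tau t).
  assert (hAT : Atau a t = lsum (seq 0 (S T)) a) by reflexivity.
  assert (ht : 0 < / t) by (apply Rinv_0_lt_compat; lra).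
  destruct (le_lt_dec n T) as [hnT | hTn].
  + eapply Rle_trans. apply head_bound; auto.
    assert (lsum (seq 0 (S n)) a <= Atau a t).
    { rewrite hAT. replace (S T) with (S n + (T - n))%nat by lia.
      rewrite lsum_seq_split.
      assert (0 <= lsum (seq (0 + S n) (T - n)) a) by (apply lsum_nonneg; auto). lra. }
    assert (0 <= 64 * C * (1 + C) * Rpower 3 beta * (Atau a t / t)).
    { unfold Rdiv. apply Rmult_le_pos; [nra|]. apply Rmult_le_pos; lra. }
    unfold Rdiv in *. nra.
  + replace (S n) with (S T + S (n - S T))%nat by lia.
    rewrite lsum_seq_split. simpl (0 + S T)%nat.
    eapply Rle_trans. apply Rabs_triang.
    pose proof (head_bound (S T) a t h1 h2 ha) as Hh. rewrite <- hAT in Hh.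
    pose proof (tail_bound n a t beta (S T) h1 h2 hbeta (hz (S n) ltac:(lia)) hTn) as Ht.
    assert (Hs : lsum (seq (S T) (S (n - S T))) (dterm beta a) <= C * a (S T)).
    { pose proof (H (S T) hTn) as HH. unfold sum_mn in HH.
      replace (S n - S T)%nat with (S (n - S T)) in HH by lia. exact HH. }
    pose proof (key beta C n a t hbeta hC h1 h2 ha hTn H) as Hk. fold T in Hk.
    assert (hp : 0 <= a (S T)) by auto.
    set (u := / t) in *.
    assert (eu : 64 / t ^ 2 = 64 * u * u) by (unfold u; field; lra).
    rewrite eu in Ht.
    assert (Ht2 : Rabs (lsum (seq (S T) (S (n - S T))) (fun k => a k * D t k))
                  <= 64 * u * u * (C * a (S T))).
    { eapply Rle_trans. exact Ht. apply Rmult_le_compat_l; nra. }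
    assert (ePI : PI / t = PI * u) by reflexivity. rewrite ePI in Hk.
    assert (hPI : 2 <= PI) by (generalize PI2_3_2; lra).
    assert (X : u * a (S T) <= (1 + C) * Rpower 3 beta * Atau a t).
    { assert (PI * (u * a (S T)) <= 2 * (1 + C) * Rpower 3 beta * Atau a t) by lra.
      assert (0 <= u * a (S T)) by nra.
      assert (2 * (u * a (S T)) <= 2 * (1 + C) * Rpower 3 beta * Atau a t) by nra.
      assert (0 <= (1 + C) * Rpower 3 beta * Atau a t) by (apply Rmult_le_pos; nra).
      nra. }
    assert (Y : 64 * u * u * (C * a (S T)) <= 64 * C * (1 + C) * Rpower 3 beta * (Atau a t * u)).
    { assert (64 * u * u * (C * a (S T)) = 64 * C * u * (u * a (S T))) by ring.
      assert (0 <= 64 * C * u) by nra. nra. }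
    unfold Rdiv. fold u. nra.
- exists (64 * (1 + C)). split. nra.
  intros n a hz H t h1 h2.
  assert (han : 0 <= a n).
  { pose proof (H n (le_n n)). assert (0 <= lsum (seq 0 n) (dterm beta a)).
    { apply lsum_nonneg; intros; apply dterm_nonneg. }
    nra. }
  rewrite Kn_eq.
  pose proof (tail_bound n a t beta 0 h1 h2 hbeta (hz (S n) ltac:(lia)) (Nat.le_0_l n)) as Ht.
  rewrite Nat.sub_0_r in Ht.
  rewrite (lsum_seqS 0 n (dterm beta a)) in Ht. simpl (0 + n)%nat in Ht.
  assert (hd : dterm beta a n = a n).
  { unfold dterm. rewrite (hz (S n)) by lia.
    replace (a n / pw n beta - 0 / pw (S n) beta) with (a n / pw n beta) by (unfold Rdiv; ring).
    rewrite Rabs_pos_eq. field. apply Rgt_not_eq, pw_pos.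
    unfold Rdiv. apply Rmult_le_pos; auto. apply Rlt_le, Rinv_0_lt_compat, pw_pos. }
  rewrite hd in Ht. pose proof (H n (le_n n)).
  assert (0 < 64 / t ^ 2) by (apply Rdiv_lt_0_compat; [lra | apply pow_lt; lra]).
  assert (64 / t ^ 2 * (lsum (seq 0 n) (dterm beta a) + a n) <= 64 / t ^ 2 * (C * a n + a n)).
  { apply Rmult_le_compat_l; lra. }
  assert (64 / t ^ 2 * (C * a n + a n) = 64 * (1 + C) * (a n / t ^ 2)) by (field; lra).
  lra.
Qed.
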